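(* Let $d_1,d_2\ge 2$ and let $\rho$ be a density matrix on $\mathbb{C}^{d_1}\otimes\mathbb{C}^{d_2}$. Let $\mathcal{P}=\{P_j\}_{j=1}^{d_1^2}$ be a general SIC-POVM on $\mathbb{C}^{d_1}$ with parameter $a_1$ and $\mathcal{Q}=\{Q_k\}_{k=1}^{d_2^2}$ a general SIC-POVM on $\mathbb{C}^{d_2}$ with parameter $a_2$. Let $d=\min\{d_1^2,d_2^2\}$ and define $$J(\rho)=\max_{\sigma,\tau}\sum_{j=1}^{d}\mathrm{Tr}\big[(P_{\sigma(j)}\otimes Q_{\tau(j)})\rho\big],$$ where the maximum runs over all injective maps $\sigma:\{1,\dots,d\}\to\{1,\dots,d_1^2\}$ and $\tau:\{1,\dots,d\}\to\{1,\dots,d_2^2\}$. If $\rho$ is separable, then $$J(\rho)\le \frac12\left[\frac{a_1d_1^2+1}{d_1(d_1+1)}+\frac{a_2d_2^2+1}{d_2(d_2+1)}\right].$$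
   Context: A general SIC-POVM on $\mathbb{C}^{n}$ with parameter $a$ is a set of $n^2$ positive semidefinite operators $\{P_\alpha\}_{\alpha=1}^{n^2}$ on $\mathbb{C}^{n}$ such that $\sum_{\alpha=1}^{n^2}P_\alpha=I$, $\mathrm{Tr}(P_\alpha^2)=a$ for all $\alpha$, and $\mathrm{Tr}(P_\alpha P_\beta)=\frac{1-na}{n(n^2-1)}$ for all $\alpha\neq\beta$; here $\frac{1}{n^3}<a\le\frac{1}{n^2}$. A density matrix on $\mathbb{C}^{d_1}\otimes\mathbb{C}^{d_2}$ is separable if it is a convex combination of product states $\rho_A\otimes\rho_B$. *)

(* Defs.v *)
(* Complex scalars: an arbitrary numClosedFieldType C
   (e.g. algC; the complex numbers are a model). *)
From HB Require Import structures.
From mathcomp Require Import all_boot all_order all_algebra.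
Set Implicit Arguments. Unset Strict Implicit. Unset Printing Implicit Defensive.
Import Order.TTheory GRing.Theory Num.Theory.
Local Open Scope ring_scope.

Definition adjmx (C : numClosedFieldType) (m n : nat) (A : 'M[C]_(m, n)) : 'M[C]_(n, m) :=
  map_mx Num.conj (A ^T).

(* Positive semidefinite: <x, A x> is real and >= 0 for all vectors x. *)
Definition psd (C : numClosedFieldType) (n : nat) (A : 'M[C]_n) : Prop :=
  forall x : 'cV[C]_n, 0 <= (adjmx x *m A *m x) 0 0.

Definition density (C : numClosedFieldType) (n : nat) (A : 'M[C]_n) : Prop :=
  psd A /\ \tr A = 1.

(* Index splitting for the Kronecker product: k = (k %/ n) * n + (k %% n). *)
Lemma kron_divP (m n : nat) (k : 'I_(m * n)) : (k %/ n < m)%N.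
Proof.
move: (nat_of_ord k) (ltn_ord k) => {}k.
case: n => [|n]; first by rewrite muln0.
by rewrite ltn_divLR.
Qed.

Lemma kron_modP (m n : nat) (k : 'I_(m * n)) : (k %% n < n)%N.
Proof.
move: (nat_of_ord k) (ltn_ord k) => {}k.
case: n => [|n]; first by rewrite muln0.
by rewrite ltn_pmod.
Qed.

Definition kdiv (m n : nat) (k : 'I_(m * n)) : 'I_m := Ordinal (kron_divP k).
Definition kmod (m n : nat) (k : 'I_(m * n)) : 'I_n := Ordinal (kron_modP k).

Definition kron (C : numClosedFieldType) (m n : nat)
  (A : 'M[C]_m) (B : 'M[C]_n) : 'M[C]_(m * n) :=
  \matrix_(i, j) (A (kdiv i) (kdiv j) * B (kmod i) (kmod j)).

Definition gen_SIC_POVM (C : numClosedFieldType) (n : nat) (a : C)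
  (P : 'I_(n ^ 2) -> 'M[C]_n) : Prop :=
  [/\ forall al, psd (P al),
      \sum_(al < n ^ 2) P al = 1%:M,
      forall al, \tr (P al *m P al) = a
    & forall al be, al != be ->
        \tr (P al *m P be) = (1 - n%:R * a) / (n%:R * (n%:R ^+ 2 - 1))].

Definition separable (C : numClosedFieldType) (d1 d2 : nat)
  (rho : 'M[C]_(d1 * d2)) : Prop :=
  exists (r : nat) (p : 'I_r -> C) (A : 'I_r -> 'M[C]_d1) (B : 'I_r -> 'M[C]_d2),
    [/\ forall i, 0 <= p i,
        \sum_(i < r) p i = 1,
        forall i, density (A i),
        forall i, density (B i)
      & rho = \sum_(i < r) p i *: kron (A i) (B i)].

Definition J_term (C : numClosedFieldType) (d1 d2 : nat)
  (P : 'I_(d1 ^ 2) -> 'M[C]_d1) (Q : 'I_(d2 ^ 2) -> 'M[C]_d2)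
  (rho : 'M[C]_(d1 * d2))
  (sigma : 'I_(minn (d1 ^ 2) (d2 ^ 2)) -> 'I_(d1 ^ 2))
  (tau : 'I_(minn (d1 ^ 2) (d2 ^ 2)) -> 'I_(d2 ^ 2)) : C :=
  \sum_(j < minn (d1 ^ 2) (d2 ^ 2)) \tr (kron (P (sigma j)) (Q (tau j)) *m rho).

(* Main.v *)
Require Import Defs.
From HB Require Import structures.
From mathcomp Require Import all_boot all_order all_algebra.
From mathcomp Require Import mxtens ring.
Import Order.TTheory GRing.Theory Num.Theory.
Local Open Scope ring_scope.
Set Implicit Arguments. Unset Strict Implicit.

Section Aux.
Variable C : numClosedFieldType.

Definition herm n (A : 'M[C]_n) := forall i j, A j i = (A i j)^*.

Lemma adjmxD m n (X Y : 'M[C]_(m, n)) : adjmx (X + Y) = adjmx X + adjmx Y.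
Proof. by apply/matrixP=> i j; rewrite !mxE rmorphD. Qed.

Lemma adjmxZ m n (s : C) (X : 'M[C]_(m, n)) : adjmx (s *: X) = s^* *: adjmx X.
Proof. by apply/matrixP=> i j; rewrite !mxE rmorphM. Qed.

Lemma addE m n (X Y : 'M[C]_(m,n)) i j : (X+Y) i j = X i j + Y i j.
Proof. by rewrite mxE. Qed.
Lemma scaleE m n (s : C) (X : 'M[C]_(m,n)) i j : (s *: X) i j = s * X i j.
Proof. by rewrite mxE. Qed.

Definition ev n (i : 'I_n) : 'cV[C]_n := delta_mx i 0.

Lemma q_e n (A : 'M[C]_n) i j :
  (adjmx (ev i) *m A *m ev j) 0 0 = A i j.
Proof.
rewrite /ev.
have -> : adjmx (delta_mx i 0 : 'cV[C]_n) = (delta_mx 0 i : 'rV[C]_n).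
  apply/matrixP=> k l; rewrite !mxE.
  by rewrite conjC_nat andbC.
by rewrite -rowE -colE !mxE.
Qed.

Lemma quad2 n (A : 'M[C]_n) i j s t :
  (adjmx (s *: ev i + t *: ev j) *m A
     *m (s *: ev i + t *: ev j)) 0 0 =
  s^* * s * A i i + s^* * t * A i j + t^* * s * A j i + t^* * t * A j j.
Proof.
rewrite adjmxD !adjmxZ !mulmxDl !mulmxDr -!scalemxAl -!scalemxAr.
rewrite !addE !scaleE !q_e; ring.
Qed.

Lemma psd_diag n (A : 'M[C]_n) i : psd A -> 0 <= A i i.
Proof. by move=> h; have := h (ev i); rewrite q_e. Qed.

Lemma psd_herm n (A : 'M[C]_n) : psd A -> herm A.
Proof.
move=> h i j.
have h1 := h (1 *: ev i + 1 *: ev j).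
have h2 := h (1 *: ev i + 'i *: ev j).
rewrite quad2 in h1; rewrite quad2 in h2.
have rii : A i i \is Num.real by apply: ger0_real; apply: psd_diag.
have rjj : A j j \is Num.real by apply: ger0_real; apply: psd_diag.
have r1 : A i j + A j i \is Num.real.
  move: (ger0_real h1); rewrite conjC1 !mul1r.
  have -> : A i i + A i j + A j i + A j j = (A i j + A j i) + (A i i + A j j) by ring.
  by move=> hr; rewrite -[X in X \is _](addrK (A i i + A j j)) realB // realD.
have r2 : 'i * (A i j - A j i) \is Num.real.
  move: (ger0_real h2); rewrite conjC1 conjCi !mul1r mulr1.
  have -> : A i i + 'i * A i j + - 'i * A j i + - 'i * 'i * A j j
     = 'i * (A i j - A j i) + (A i i - 'i ^+ 2 * A j j) by ring.
  rewrite sqrCi mulN1r opprK.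
  by move=> hr; rewrite -[X in X \is _](addrK (A i i + A j j)) realB // realD.
have e1 : (A i j)^* + (A j i)^* = A i j + A j i.
  by rewrite -rmorphD; apply/CrealP.
have e2 : - 'i * ((A i j)^* - (A j i)^*) = 'i * (A i j - A j i).
  by rewrite -conjCi -rmorphB -rmorphM; apply/CrealP.
have hi : 'i != 0 :> C by exact: neq0Ci.
have e3 : (A i j)^* - (A j i)^* = A j i - A i j.
  apply: (mulfI hi); rewrite -[LHS]opprK -mulNr e2; ring.
have h2n : (2 : C) != 0 by rewrite pnatr_eq0.
apply: (mulfI h2n).
have -> : 2 * A j i = (A i j + A j i) + (A j i - A i j) by ring.
rewrite -e1 -e3; ring.
Qed.

Lemma conjB (x y : C) : (x - y)^* = x^* - y^*.
Proof. exact: rmorphB. Qed.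

Lemma conjM (x y : C) : (x * y)^* = x^* * y^*.
Proof. exact: rmorphM. Qed.

Lemma conjN (x : C) : (- x)^* = - x^*.
Proof. exact: rmorphN. Qed.

Lemma conj_ge0 (x : C) : 0 <= x -> x^* = x.
Proof. by move=> /ger0_real /CrealP. Qed.

Lemma psd_minor n (A : 'M[C]_n) i j : psd A ->
  A i j * (A i j)^* <= A i i * A j j.
Proof.
move=> h; have hh := psd_herm h.
have u0 := psd_diag i h; have v0 := psd_diag j h.
have cu := conj_ge0 u0; have cv := conj_ge0 v0.
set u := A i i in u0 cu *; set v := A j j in v0 cv *; set w := A i j.
have hw : A j i = w^* by rewrite hh.
have k0 : 0 <= w * w^* by apply: mul_conjC_ge0.
have h1 := h (v *: ev i + (- w^*) *: ev j).
rewrite quad2 -/u -/v -/w hw conjN conjCK cv in h1.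
have h2 := h ((- w) *: ev i + u *: ev j).
rewrite quad2 -/u -/v -/w hw conjN cu in h2.
have e1 : v * v * u + v * - w^* * w + - w * v * w^* + - w * - w^* * v
   = v * (u * v - w * w^*) by ring.
have e2 : - w^* * - w * u + - w^* * u * w + u * - w * w^* + u * u * v
   = u * (u * v - w * w^*) by ring.
rewrite e1 in h1; rewrite e2 in h2.
have s0 : 0 <= (u + v) * (u * v - w * w^*) by rewrite mulrDl addr_ge0.
rewrite -subr_ge0.
have uvge : 0 <= u + v by rewrite addr_ge0.
case: (eqVneq (u + v) 0) => [uv0|uvn]; last first.
  have uvp : 0 < u + v by rewrite lt0r uvn uvge.
  by rewrite -(pmulr_rge0 _ uvp).
have u00 : u = 0.
  by apply/eqP; rewrite eq_le u0 andbT -uv0 lerDl.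
have v00 : v = 0 by move: uv0; rewrite u00 add0r.
have h3 := h (1 *: ev i + (- w^*) *: ev j).
rewrite quad2 -/u -/v -/w hw conjN conjCK conjC1 u00 v00 in h3.
have e3 : 1 * 1 * 0 + 1 * - w^* * w + - w * 1 * w^* + - w * - w^* * 0
   = - (w * w^*) *+ 2 by rewrite mulr2n; ring.
rewrite e3 pmulrn_lge0 // oppr_ge0 in h3.
have -> : w * w^* = 0 by apply/eqP; rewrite eq_le h3 k0.
by rewrite u00 v00 mul0r subrr.
Qed.

Lemma herm_tr_real n (X Y : 'M[C]_n) : herm X -> herm Y ->
  (\tr (X *m Y))^* = \tr (X *m Y).
Proof.
move=> hX hY; rewrite /mxtrace rmorph_sum.
under eq_bigr do rewrite mxE rmorph_sum.
rewrite exchange_big /=; apply: eq_bigr => i _; rewrite mxE.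
by apply: eq_bigr => j _; rewrite conjM -hX -hY.
Qed.

Lemma tr_sq_le n (A : 'M[C]_n) : psd A -> \tr (A *m A) <= (\tr A) ^+ 2.
Proof.
move=> h; have hh := psd_herm h.
rewrite expr2 /mxtrace mulr_suml.
apply: ler_sum => i _; rewrite mxE mulr_sumr; apply: ler_sum => j _.
by rewrite [A j i]hh psd_minor.
Qed.


Lemma hermD n (X Y : 'M[C]_n) : herm X -> herm Y -> herm (X + Y).
Proof. by move=> hX hY i j; rewrite !mxE hX hY rmorphD. Qed.
Lemma hermN n (X : 'M[C]_n) : herm X -> herm (- X).
Proof. by move=> hX i j; rewrite !mxE hX conjN. Qed.
Lemma hermB n (X Y : 'M[C]_n) : herm X -> herm Y -> herm (X - Y).
Proof. by move=> hX hY; apply: hermD => //; apply: hermN. Qed.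
Lemma hermZ n (c : C) (X : 'M[C]_n) : c^* = c -> herm X -> herm (c *: X).
Proof. by move=> hc hX i j; rewrite !mxE hX conjM hc. Qed.
Lemma herm1 n : herm (1%:M : 'M[C]_n).
Proof. by move=> i j; rewrite !mxE conjC_nat eq_sym. Qed.
Lemma herm0 n : herm (0 : 'M[C]_n).
Proof. by move=> i j; rewrite !mxE conjC0. Qed.
Lemma herm_sum n (I : finType) (F : I -> 'M[C]_n) :
  (forall i, herm (F i)) -> herm (\sum_i F i).
Proof.
move=> hF; apply: (big_ind (fun X => herm X)) => //; [exact: herm0|].
by move=> X Y; apply: hermD.
Qed.

Lemma herm_tr_sq_ge0 n (H : 'M[C]_n) : herm H -> 0 <= \tr (H *m H).
Proof.
move=> hH; rewrite /mxtrace; apply: sumr_ge0 => i _; rewrite mxE.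
by apply: sumr_ge0 => j _; rewrite [H j i]hH mul_conjC_ge0.
Qed.

Lemma tr_sum n (I : finType) (F : I -> 'M[C]_n) :
  \tr (\sum_i F i) = \sum_i \tr (F i).
Proof. exact: linear_sum. Qed.

Lemma sic_bound n (a : C) (P : 'I_(n ^ 2) -> 'M[C]_n) (A : 'M[C]_n) :
  (2 <= n)%N -> 1 / (n%:R ^+ 3) < a -> gen_SIC_POVM a P -> density A ->
  \sum_al (\tr (P al *m A)) ^+ 2 <= (a * n%:R ^+ 2 + 1) / (n%:R * (n%:R + 1)).
Proof.
move=> hn ha [Ppsd Psum Pdiag Poff] [Apsd Atr].
set N := n%:R : C.
have Ngt0 : 0 < N by rewrite ltr0n (leq_trans _ hn).
have N0 : N != 0 by rewrite gt_eqF.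
have N21p : 0 < N ^+ 2 - 1.
  rewrite subr_gt0 /N -natrX ltr1n.
  have -> : (n ^ 2 = n * n)%N by rewrite expnS expn1.
  by apply: (@leq_trans (2 * 2)) => //; apply: leq_mul.
have N21 : N ^+ 2 - 1 != 0 by rewrite gt_eqF.
have N1 : N + 1 != 0 by rewrite gt_eqF // addr_gt0.
have Dp : 0 < N * (N ^+ 2 - 1) by rewrite mulr_gt0.
have Npos : (0 < n ^ 2)%N by rewrite expn_gt0 (leq_trans _ hn).
set b := (1 - N * a) / (N * (N ^+ 2 - 1)).
have bound_eq : a - b + b * N = (a * N ^+ 2 + 1) / (N * (N + 1)).
  by rewrite /b; field; rewrite ?N0 ?N1 ?N21.
have hb : b * (N * (N ^+ 2 - 1)) = 1 - N * a by rewrite mulfVK // gt_eqF.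
have a0 : 0 < a.
  apply: lt_trans ha; rewrite divr_gt0 // exprn_gt0 //.
have ar : a^* = a by apply: conj_ge0; apply: ltW.
have br : b^* = b.
  apply/CrealP; rewrite /b !(rpredM, rpredV, rpredB, rpredX, rpred1, realn) //.
  exact: gtr0_real a0.
have lam0 : 0 < a - b.
  rewrite subr_gt0 -(ltr_pM2r Dp) hb.
  have -> : a * (N * (N ^+ 2 - 1)) = a * N ^+ 3 - N * a by ring.
  by rewrite ltrD2r -ltr_pdivrMr // exprn_gt0.
have le_b : a - b + b * N <= (a * N ^+ 2 + 1) / (N * (N + 1)) by rewrite bound_eq.
apply: le_trans le_b.
have bdef : b = (1 - N * a) / (N * (N ^+ 2 - 1)) by [].
clearbody b.
set x := fun al => \tr (P al *m A).
have hA := psd_herm Apsd.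
have hPh := fun al => psd_herm (Ppsd al).
have xr : forall al, (x al)^* = x al by move=> al; apply: herm_tr_real.
have G : forall al be, \tr (P al *m P be) = if al == be then a else b.
  move=> al be; case: eqP => [->|/eqP ne]; first exact: Pdiag.
  by rewrite Poff // bdef.
have sx : \sum_al x al = 1.
  by rewrite /x -tr_sum -mulmx_suml Psum mul1mx Atr.
have trP : forall be, \tr (P be) = a + b * (N ^+ 2 - 1).
  move=> be; rewrite -[P be]mulmx1 -Psum mulmx_sumr tr_sum (bigD1 be) //= G eqxx.
  rewrite (eq_bigr (fun _ => b)); last by move=> al hal; rewrite G eq_sym (negbTE hal).
  rewrite sumr_const cardC1 card_ord -mulr_natr; congr (_ + _ * _).
  by rewrite -subn1 natrB // natrX.
set S := \sum_al x al ^+ 2.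
set M := \sum_al x al *: P al.
have trMA : \tr (M *m A) = S.
  rewrite /M mulmx_suml tr_sum; apply: eq_bigr => al _.
  by rewrite -scalemxAl mxtraceZ expr2.
have trAM : \tr (A *m M) = S by rewrite mxtrace_mulC.
have trM : \tr M = a + b * (N ^+ 2 - 1).
  rewrite /M tr_sum (eq_bigr (fun al => x al * (a + b * (N ^+ 2 - 1)))).
    by rewrite -mulr_suml sx mul1r.
  by move=> al _; rewrite mxtraceZ trP.
have trPM : forall al, \tr (P al *m M) = x al * a + b * (1 - x al).
  move=> al; rewrite /M mulmx_sumr tr_sum (bigD1 al) //= -scalemxAr mxtraceZ G eqxx.
  rewrite (eq_bigr (fun be => x be * b)); last first.
    by move=> be hbe; rewrite -scalemxAr mxtraceZ G eq_sym (negbTE hbe) mulrC.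
  rewrite -mulr_suml; congr (_ + _); last first.
    by rewrite mulrC -sx [X in _ = _ * (X - _)](bigD1 al) //= addrC addrK.
have trMM : \tr (M *m M) = (a - b) * S + b.
  rewrite {1}/M mulmx_suml tr_sum.
  rewrite (eq_bigr (fun al => (a - b) * x al ^+ 2 + b * x al)); last first.
    by move=> al _; rewrite -scalemxAl mxtraceZ trPM; ring.
  by rewrite big_split /= -!mulr_sumr sx mulr1.
have hM : herm M.
  by apply: herm_sum => al; apply: hermZ; [exact: xr | exact: hPh].
have lr : (a - b)^* = a - b by rewrite conjB ar br.
have mr : (b * N)^* = b * N by rewrite conjM br conjC_nat.
set H := M - ((a - b) *: A + (b * N) *: 1%:M).
have hH : herm H.
  by apply: hermB => //; apply: hermD; apply: hermZ => //; apply: herm1.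
have h0 := herm_tr_sq_ge0 hH.
set p := \tr (A *m A).
have hp : p <= 1 by rewrite -(expr1n _ 2) -Atr; apply: tr_sq_le.
have eH : \tr (H *m H) = (a - b) * ((a - b) * p + b * N - S).
  rewrite /H !(mulmxBl, mulmxBr, mulmxDl, mulmxDr) -!scalemxAl -!scalemxAr.
  rewrite !(mul1mx, mulmx1) !(raddfB, raddfD) /= !mxtraceZ mxtrace1.
  rewrite trMM trMA trAM trM Atr -/p.
  transitivity ((a - b) * ((a - b) * p + b * N - S)
     + b * ((1 - N * a) - b * (N * (N ^+ 2 - 1)))); first by rewrite /N; ring.
  by rewrite hb subrr mulr0 addr0.
rewrite eH pmulr_rge0 // subr_ge0 in h0.
apply: (le_trans h0); rewrite lerD2r -[X in _ <= X]mulr1.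
by rewrite ler_wpM2l // ltW.
Qed.


Lemma kron_tens m n (X : 'M[C]_m) (Y : 'M[C]_n) : kron X Y = X *t Y.
Proof. by apply/matrixP => i j; rewrite !mxE; congr (X _ _ * Y _ _); apply: val_inj. Qed.

Lemma tr_tens m n (X : 'M[C]_m) (Y : 'M[C]_n) : \tr (X *t Y) = \tr X * \tr Y.
Proof. by rewrite /mxtrace mxtens.mulr_sum; apply: eq_bigr => k _; rewrite mxE. Qed.

Lemma tr_kron m n (X A : 'M[C]_m) (Y B : 'M[C]_n) :
  \tr (kron X Y *m kron A B) = \tr (X *m A) * \tr (Y *m B).
Proof. by rewrite !kron_tens tensmx_mul tr_tens. Qed.

Lemma amgm (x y : C) : x \is Num.real -> y \is Num.real ->
  x * y <= 1 / 2 * (x ^+ 2 + y ^+ 2).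
Proof.
move=> xr yr; rewrite -subr_ge0.
have -> : 1 / 2 * (x ^+ 2 + y ^+ 2) - x * y = (x - y) ^+ 2 / 2.
  by field.
apply: divr_ge0; last exact: ler0n.
by apply: real_exprn_even_ge0 => //; apply: realB.
Qed.

Lemma sub_sum (I J : finType) (s : I -> J) (f : J -> C) :
  injective s -> (forall j, 0 <= f j) -> \sum_i f (s i) <= \sum_j f j.
Proof.
move=> inj f0.
rewrite -(big_imset _ (in2W inj)) /=.
rewrite [X in _ <= X](bigID (mem [set s x | x in I])) /=.
by rewrite lerDl sumr_ge0.
Qed.
End Aux.

Theorem theorem1 (C : numClosedFieldType) (d1 d2 : nat)
  (hd1 : (2 <= d1)%N) (hd2 : (2 <= d2)%N)
  (rho : 'M[C]_(d1 * d2)) (hrho : density rho)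
  (a1 a2 : C)
  (ha1 : 1 / (d1%:R ^+ 3) < a1) (ha1' : a1 <= 1 / (d1%:R ^+ 2))
  (ha2 : 1 / (d2%:R ^+ 3) < a2) (ha2' : a2 <= 1 / (d2%:R ^+ 2))
  (P : 'I_(d1 ^ 2) -> 'M[C]_d1) (Q : 'I_(d2 ^ 2) -> 'M[C]_d2)
  (hP : gen_SIC_POVM a1 P) (hQ : gen_SIC_POVM a2 Q)
  (hsep : separable rho) :
  forall (sigma : 'I_(minn (d1 ^ 2) (d2 ^ 2)) -> 'I_(d1 ^ 2))
         (tau : 'I_(minn (d1 ^ 2) (d2 ^ 2)) -> 'I_(d2 ^ 2)),
    injective sigma -> injective tau ->
    J_term P Q rho sigma tau <=
      (1 / 2) * ((a1 * d1%:R ^+ 2 + 1) / (d1%:R * (d1%:R + 1))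
               + (a2 * d2%:R ^+ 2 + 1) / (d2%:R * (d2%:R + 1))).
Proof.
move=> sigma tau isig itau.
case: hsep => r [p] [A] [B] [p0 psum hA hB ->].
set K := (1 / 2) * _.
rewrite /J_term.
under eq_bigr => j _ do rewrite mulmx_sumr tr_sum.
rewrite exchange_big /=.
rewrite (eq_bigr (fun i => p i * \sum_j (\tr (P (sigma j) *m A i) * \tr (Q (tau j) *m B i))));
  last first.
  move=> i _; rewrite mulr_sumr; apply: eq_bigr => j _.
  by rewrite -scalemxAr mxtraceZ tr_kron.
have -> : K = \sum_i p i * K by rewrite -mulr_suml psum mul1r.
apply: ler_sum => i _; apply: ler_wpM2l => //.
set x := fun al => \tr (P al *m A i).
set y := fun be => \tr (Q be *m B i).
have [hAp _] := hA i; have [hBp _] := hB i.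
have xr : forall al, x al \is Num.real.
  move=> al; apply/CrealP; apply: herm_tr_real; last exact: psd_herm.
  by case: hP => Pp _ _ _; apply: psd_herm.
have yr : forall be, y be \is Num.real.
  move=> be; apply/CrealP; apply: herm_tr_real; last exact: psd_herm.
  by case: hQ => Qp _ _ _; apply: psd_herm.
apply: (le_trans (ler_sum _ (fun j _ => amgm (xr (sigma j)) (yr (tau j))))).
rewrite -mulr_sumr big_split /= /K ler_wpM2l //; first by rewrite divr_ge0 ?ler0n.
apply: lerD.
  apply: le_trans (sic_bound hd1 ha1 hP (hA i)).
  by apply: (sub_sum (f := fun al => x al ^+ 2)) => // al; apply: real_exprn_even_ge0.
apply: le_trans (sic_bound hd2 ha2 hQ (hB i)).
by apply: (sub_sum (f := fun al => y al ^+ 2)) => // al; apply: real_exprn_even_ge0.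
Qed.
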